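(* Consider the cubic system \[ \dot x = -y + a_{02}y^2 + a_{03}y^3,\qquad \dot y = x + b_{20}x^2 + b_{11}xy + b_{02}y^2 + b_{30}x^3 + b_{21}x^2y + b_{12}xy^2, \] where the coefficients $a_{02},a_{03},b_{20},b_{11},b_{02},b_{30},b_{21},b_{12}$ are allowed to be complex (the system being considered on $\mathbb{C}^2$; for real coefficients this is a real planar system). The system is linearizable at the origin if one of the following conditions holds: \begin{enumerate} \item $b_{12}=a_{02}=b_{30}=b_{21}=a_{03}=b_{02}+b_{20}=b_{11}^2+4b_{20}^2=0$; \item $b_{12}=a_{02}=b_{20}=b_{02}=b_{21}=a_{03}=9b_{30}-b_{11}^2=0$; \item $b_{12}=a_{02}=b_{11}=b_{20}=b_{30}=b_{21}=9a_{03}+4b_{02}^2=0$; \item $b_{12}=b_{30}=b_{21}=a_{03}=2b_{02}+5b_{20}=10a_{02}-3b_{11}=4b_{11}^2+25b_{20}^2=0$. \end{enumerate}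
   Context: A system $\dot x=-y+P(x,y)$, $\dot y = x+Q(x,y)$, with $P,Q$ polynomials without constant and linear terms, is called linearizable (at the origin) if there is an analytic change of coordinates $x_1 = x+\sum_{m+n\ge 2}c_{m,n}x^my^n$, $y_1=y+\sum_{m+n\ge2}d_{m,n}x^my^n$ which transforms it into $\dot x_1=-y_1$, $\dot y_1 = x_1$. For real systems, linearizability at the origin is equivalent to the origin being an isochronous center (a center all of whose nearby periodic orbits have the same period). *)

(* Defs.v *)
From Stdlib Require Import Reals.
Open Scope R_scope.

Record CC : Type := mkC { Cre : R ; Cim : R }.

Definition C0 : CC := mkC 0 0.
Definition C1 : CC := mkC 1 0.
Definition Cadd (z w : CC) : CC := mkC (Cre z + Cre w) (Cim z + Cim w).
Definition Copp (z : CC) : CC := mkC (- Cre z) (- Cim z).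
Definition Cmul (z w : CC) : CC :=
  mkC (Cre z * Cre w - Cim z * Cim w) (Cre z * Cim w + Cim z * Cre w).
Definition natC (n : nat) : CC := mkC (INR n) 0.
Definition Cnorm (z : CC) : R := sqrt (Cre z * Cre z + Cim z * Cim z).

Fixpoint Csum (n : nat) (f : nat -> CC) : CC :=
  match n with
  | O => C0
  | S k => Cadd (Csum k f) (f k)
  end.

(** * Formal power series in two variables x, y over CC:
    [F i j] is the coefficient of x^i y^j. *)
Definition series := nat -> nat -> CC.

Definition sadd (F G : series) : series := fun i j => Cadd (F i j) (G i j).
Definition sopp (F : series) : series := fun i j => Copp (F i j).
Definition smul (F G : series) : series := fun i j =>
  Csum (S i) (fun a => Csum (S j) (fun b =>
    Cmul (F a b) (G (i - a)%nat (j - b)%nat))).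
Definition sdx (F : series) : series := fun i j => Cmul (natC (S i)) (F (S i) j).
Definition sdy (F : series) : series := fun i j => Cmul (natC (S j)) (F i (S j)).
Definition mono (c : CC) (m n : nat) : series := fun i j =>
  if andb (Nat.eqb i m) (Nat.eqb j n) then c else C0.

(** A power series is convergent (defines an analytic function) on some
    polydisc around the origin: its coefficients satisfy a Cauchy estimate. *)
Definition convergent (F : series) : Prop :=
  exists r M : R, 0 < r /\ forall i j : nat, Cnorm (F i j) * r ^ (i + j) <= M.

(** Linearizability of  x' = P(x,y), y' = Q(x,y)  at the origin:
    there is an analytic change of coordinates
      x1 = x + sum_{m+n>=2} c_{mn} x^m y^n,  y1 = y + sum_{m+n>=2} d_{mn} x^m y^n
    transforming the system into  x1' = -y1, y1' = x1, i.e. the derivatives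
    of x1, y1 along the vector field (P,Q) equal -y1 and x1 respectively,
    as identities of (convergent) power series. *)
Definition linearizable (P Q : series) : Prop :=
  exists X1 Y1 : series,
    X1 0%nat 0%nat = C0 /\ X1 1%nat 0%nat = C1 /\ X1 0%nat 1%nat = C0 /\
    Y1 0%nat 0%nat = C0 /\ Y1 1%nat 0%nat = C0 /\ Y1 0%nat 1%nat = C1 /\
    convergent X1 /\ convergent Y1 /\
    (forall i j : nat,
        sadd (smul (sdx X1) P) (smul (sdy X1) Q) i j = sopp Y1 i j) /\
    (forall i j : nat,
        sadd (smul (sdx Y1) P) (smul (sdy Y1) Q) i j = X1 i j).

Definition Pcub (a02 a03 : CC) : series :=
  sadd (mono (Copp C1) 0 1) (sadd (mono a02 0 2) (mono a03 0 3)).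
Definition Qcub (b20 b11 b02 b30 b21 b12 : CC) : series :=
  sadd (mono C1 1 0)
  (sadd (mono b20 2 0) (sadd (mono b11 1 1) (sadd (mono b02 0 2)
  (sadd (mono b30 3 0) (sadd (mono b21 2 1) (mono b12 1 2)))))).

Declare Scope C_scope.
Delimit Scope C_scope with C.
Notation "x + y" := (Cadd x y) : C_scope.
Notation "x * y" := (Cmul x y) : C_scope.
Notation "- x" := (Copp x) : C_scope.
Notation "x - y" := (Cadd x (Copp y)) : C_scope.

(* Main.v *)
Require Import Defs.
From Stdlib Require Import Reals.
From Stdlib Require Import Lra Lia Psatz Ring Field FunctionalExtensionality List.
Require Import Defs.
Open Scope R_scope.
Import ListNotations.


Lemma CC_ext : forall a b c d : R, a = c -> b = d -> mkC a b = mkC c d.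
Proof. intros; subst; reflexivity. Qed.

Definition Csub (a b : CC) : CC := Cadd a (Copp b).

Lemma CC_ring : ring_theory C0 C1 Cadd Cmul Csub Copp (@eq CC).
Proof.
  constructor; intros;
  repeat match goal with z : CC |- _ => destruct z end;
  unfold Csub, Cadd, Cmul, Copp, C0, C1; simpl; apply CC_ext; ring.
Qed.
Add Ring CCr : CC_ring.

Ltac Ceq := repeat match goal with z : CC |- _ => destruct z end;
  unfold Csub, Cadd, Cmul, Copp, C0, C1, natC in *; simpl in *; apply CC_ext.

Lemma natC_S : forall n, natC (S n) = Cadd (natC n) C1.
Proof. intros; unfold natC, Cadd, C1; cbn [Cre Cim]; apply CC_ext; [rewrite S_INR; ring | ring]. Qed.
Lemma natC_0 : natC 0 = C0.
Proof. reflexivity. Qed.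
Lemma natC_add : forall a b, natC (a + b) = Cadd (natC a) (natC b).
Proof. intros; unfold natC, Cadd; cbn [Cre Cim]; apply CC_ext; [rewrite plus_INR; ring | ring]. Qed.
Lemma natC_mul : forall a b, natC (a * b) = Cmul (natC a) (natC b).
Proof. intros; unfold natC, Cmul; cbn [Cre Cim]; apply CC_ext; [rewrite mult_INR; ring | ring]. Qed.

Lemma Csum_ext : forall n f g, (forall a, (a < n)%nat -> f a = g a) -> Csum n f = Csum n g.
Proof.
  induction n; intros f g H; simpl; [reflexivity|].
  rewrite (IHn f g) by (intros; apply H; lia). rewrite H by lia. reflexivity.
Qed.
Lemma Csum_add : forall n f g, Csum n (fun a => Cadd (f a) (g a)) = Cadd (Csum n f) (Csum n g).
Proof. induction n; intros; simpl; [Ceq; ring|]. rewrite IHn. ring. Qed.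
Lemma Csum_opp : forall n f, Csum n (fun a => Copp (f a)) = Copp (Csum n f).
Proof. induction n; intros; simpl; [Ceq; ring|]. rewrite IHn. ring. Qed.
Lemma Csum_scal_l : forall n c f, Csum n (fun a => Cmul c (f a)) = Cmul c (Csum n f).
Proof. induction n; intros; simpl; [Ceq; ring|]. rewrite IHn. ring. Qed.
Lemma Csum_shift : forall n f, Csum (S n) f = Cadd (f 0%nat) (Csum n (fun a => f (S a))).
Proof. induction n; intros; simpl in *; [ring|]. rewrite IHn. ring. Qed.
Lemma Csum_zero : forall n f, (forall a, (a < n)%nat -> f a = C0) -> Csum n f = C0.
Proof. induction n; intros f H; simpl; [reflexivity|]. rewrite IHn by (intros; apply H; lia).
  rewrite H by lia. ring. Qed.
Lemma Csum_single : forall n m f, (m < n)%nat -> (forall a, (a < n)%nat -> a <> m -> f a = C0) ->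
  Csum n f = f m.
Proof.
  induction n; intros m f Hm H; [lia|]. simpl.
  destruct (Nat.eq_dec m n) as [->|Hne].
  - rewrite Csum_zero by (intros; apply H; lia). ring.
  - rewrite (IHn m f) by (try lia; intros; apply H; lia). rewrite (H n) by lia. ring.
Qed.

(* Leibniz-type reindexing *)
Lemma Csum_leib : forall n (K : nat -> nat -> CC),
  Cmul (natC (S n)) (Csum (S (S n)) (fun a => K a (S n - a)%nat)) =
  Cadd (Csum (S n) (fun a => Cmul (natC (S a)) (K (S a) (n - a)%nat)))
       (Csum (S n) (fun a => Cmul (natC (S (n - a))) (K a (S (n - a))))).
Proof.
  intros n K.
  transitivity (Cadd (Csum (S (S n)) (fun a => Cmul (natC a) (K a (S n - a)%nat)))
                     (Csum (S (S n)) (fun a => Cmul (natC (S n - a)) (K a (S n - a)%nat)))).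
  - rewrite <- Csum_add, <- Csum_scal_l. apply Csum_ext. intros a Ha.
    replace (natC (S n)) with (Cadd (natC a) (natC (S n - a))).
    + ring.
    + rewrite <- natC_add. f_equal. lia.
  - f_equal.
    + rewrite Csum_shift, natC_0.
      assert (E: Csum (S n) (fun a => Cmul (natC (S a)) (K (S a) (S n - S a)%nat)) =
                 Csum (S n) (fun a => Cmul (natC (S a)) (K (S a) (n - a)%nat))) by reflexivity.
      rewrite E. ring.
    + change (Csum (S (S n)) ?f) with (Cadd (Csum (S n) f) (f (S n))).
      cbv beta. rewrite Nat.sub_diag, natC_0.
      transitivity (Csum (S n) (fun a => Cmul (natC (S n - a)) (K a (S n - a)%nat))); [ring|].
      apply Csum_ext. intros a Ha. replace (S n - a)%nat with (S (n - a)) by lia. reflexivity.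
Qed.

Fixpoint Rsum (n : nat) (f : nat -> R) : R :=
  match n with O => 0 | S k => Rsum k f + f k end.
Lemma Rsum_le : forall n f g, (forall a, (a < n)%nat -> f a <= g a) -> Rsum n f <= Rsum n g.
Proof. induction n; intros f g H; simpl; [lra|]. specialize (IHn f g). assert (f n <= g n) by (apply H; lia).
  assert (Rsum n f <= Rsum n g) by (apply IHn; intros; apply H; lia). lra. Qed.
Lemma Rsum_const : forall n c, Rsum n (fun _ => c) = INR n * c.
Proof. induction n; intros; simpl Rsum; [simpl; ring|]. rewrite IHn, S_INR. ring. Qed.

Definition szero : series := fun _ _ => C0.
Definition sone : series := mono C1 0 0.
Definition ssub (F G : series) : series := sadd F (sopp G).

Lemma sext : forall F G : series, (forall i j, F i j = G i j) -> F = G.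
Proof. intros F G H. apply functional_extensionality; intro i.
  apply functional_extensionality; intro j. apply H. Qed.

Lemma mono_val : forall c m n a b, mono c m n a b = if andb (Nat.eqb a m) (Nat.eqb b n) then c else C0.
Proof. reflexivity. Qed.

Lemma smul_mono_l : forall c m n F i j,
  smul (mono c m n) F i j = if andb (Nat.leb m i) (Nat.leb n j) then Cmul c (F (i - m)%nat (j - n)%nat) else C0.
Proof.
  intros c m n F i j. unfold smul.
  destruct (Nat.leb_spec m i); destruct (Nat.leb_spec n j); cbn [andb].
  - rewrite (Csum_single (S i) m); [|lia|].
    + rewrite (Csum_single (S j) n); [|lia|].
      * rewrite mono_val, !Nat.eqb_refl. reflexivity.
      * intros b Hb Hne. rewrite mono_val, Nat.eqb_refl. destruct (Nat.eqb_spec b n); [lia|]. simpl. ring.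
    + intros a Ha Hne. apply Csum_zero. intros b Hb. rewrite mono_val.
      destruct (Nat.eqb_spec a m); [lia|]. simpl. ring.
  - apply Csum_zero; intros a Ha; apply Csum_zero; intros b Hb; rewrite mono_val.
    destruct (Nat.eqb_spec a m), (Nat.eqb_spec b n); simpl; try ring; lia.
  - apply Csum_zero; intros a Ha; apply Csum_zero; intros b Hb; rewrite mono_val.
    destruct (Nat.eqb_spec a m), (Nat.eqb_spec b n); simpl; try ring; lia.
  - apply Csum_zero; intros a Ha; apply Csum_zero; intros b Hb; rewrite mono_val.
    destruct (Nat.eqb_spec a m), (Nat.eqb_spec b n); simpl; try ring; lia.
Qed.

Lemma smul_1_l : forall F, smul sone F = F.
Proof. intro F. apply sext; intros i j. unfold sone. rewrite smul_mono_l. simpl.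
  rewrite !Nat.sub_0_r. ring. Qed.

Lemma sdx_leib : forall F G, sdx (smul F G) = sadd (smul (sdx F) G) (smul F (sdx G)).
Proof.
  intros F G. apply sext; intros i j. unfold sdx at 1, smul at 1.
  rewrite (Csum_leib i (fun a c => Csum (S j) (fun b => Cmul (F a b) (G c (j - b)%nat)))).
  unfold sadd, smul, sdx. f_equal.
  - apply Csum_ext; intros a Ha. rewrite <- Csum_scal_l. apply Csum_ext; intros b Hb. ring.
  - apply Csum_ext; intros a Ha. rewrite <- Csum_scal_l. apply Csum_ext; intros b Hb.
    replace (i - a)%nat with (i - a)%nat by reflexivity. ring.
Qed.

Lemma sdy_leib : forall F G, sdy (smul F G) = sadd (smul (sdy F) G) (smul F (sdy G)).
Proof.
  intros F G. apply sext; intros i j. unfold sdy at 1, smul at 1.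
  rewrite <- Csum_scal_l. unfold sadd, smul, sdy. rewrite <- Csum_add. apply Csum_ext; intros a Ha.
  rewrite (Csum_leib j (fun b c => Cmul (F a b) (G (i - a)%nat c))).
  f_equal.
  - apply Csum_ext; intros b Hb. ring.
  - apply Csum_ext; intros b Hb. ring.
Qed.

Lemma natC_inv : forall n, Cmul (mkC (/ INR (S n)) 0) (natC (S n)) = C1.
Proof. intro n. unfold natC, Cmul, C1. cbn [Cre Cim]. apply CC_ext; [|ring].
  field. apply not_0_INR. lia. Qed.
Lemma natC_cancel : forall n a b, Cmul (natC (S n)) a = Cmul (natC (S n)) b -> a = b.
Proof. intros n a b H.
  assert (E: forall x, Cmul (mkC (/ INR (S n)) 0) (Cmul (natC (S n)) x) = x).
  { intro x. transitivity (Cmul (Cmul (mkC (/ INR (S n)) 0) (natC (S n))) x); [ring|].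
    rewrite natC_inv; ring. }
  rewrite <- (E a), <- (E b), H. reflexivity.
Qed.
Lemma coef_sdx : forall A B i j, sdx A i j = sdx B i j -> A (S i) j = B (S i) j.
Proof. unfold sdx; intros. eapply natC_cancel; eauto. Qed.
Lemma coef_sdy : forall A B i j, sdy A i j = sdy B i j -> A i (S j) = B i (S j).
Proof. unfold sdy; intros. eapply natC_cancel; eauto. Qed.

Lemma smul_00 : forall F G, smul F G 0%nat 0%nat = Cmul (F 0%nat 0%nat) (G 0%nat 0%nat).
Proof. intros. unfold smul. simpl. ring. Qed.

Lemma smul_comm_deg : forall n F G i j, (i + j = n)%nat -> smul F G i j = smul G F i j.
Proof.
  induction n; intros F G i j Hn.
  - assert (i = 0%nat) by lia; assert (j = 0%nat) by lia; subst. rewrite !smul_00. ring.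
  - destruct i as [|i].
    + destruct j as [|j]; [lia|]. apply coef_sdy. rewrite !sdy_leib. unfold sadd.
      rewrite (IHn (sdy F) G), (IHn F (sdy G)) by lia. ring.
    + apply coef_sdx. rewrite !sdx_leib. unfold sadd.
      rewrite (IHn (sdx F) G), (IHn F (sdx G)) by lia. ring.
Qed.
Lemma smul_comm : forall F G, smul F G = smul G F.
Proof. intros. apply sext; intros. eapply smul_comm_deg; reflexivity. Qed.

Lemma smul_addl : forall F G H, smul (sadd F G) H = sadd (smul F H) (smul G H).
Proof. intros. apply sext; intros i j. unfold smul, sadd. rewrite <- Csum_add.
  apply Csum_ext; intros. rewrite <- Csum_add. apply Csum_ext; intros. ring. Qed.
Lemma smul_addr : forall F G H, smul H (sadd F G) = sadd (smul H F) (smul H G).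
Proof. intros. rewrite !(smul_comm H). apply smul_addl. Qed.

Lemma smul_assoc_deg : forall n F G H i j, (i + j = n)%nat ->
  smul F (smul G H) i j = smul (smul F G) H i j.
Proof.
  induction n; intros F G H i j Hn.
  - assert (i = 0%nat) by lia; assert (j = 0%nat) by lia; subst. rewrite !smul_00. ring.
  - destruct i as [|i].
    + destruct j as [|j]; [lia|]. apply coef_sdy. rewrite !sdy_leib, !smul_addr, !smul_addl.
      unfold sadd. rewrite (IHn (sdy F) G H), (IHn F (sdy G) H), (IHn F G (sdy H)) by lia. ring.
    + apply coef_sdx. rewrite !sdx_leib, !smul_addr, !smul_addl.
      unfold sadd. rewrite (IHn (sdx F) G H), (IHn F (sdx G) H), (IHn F G (sdx H)) by lia. ring.
Qed.

Lemma series_ring : ring_theory szero sone sadd smul ssub sopp (@eq series).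
Proof.
  constructor; intros; try (apply sext; intros; unfold sadd, szero, sopp, ssub; ring).
  - apply smul_1_l.
  - apply smul_comm.
  - apply sext; intros. eapply smul_assoc_deg; reflexivity.
  - apply smul_addl.
  - reflexivity.
Qed.
Add Ring seriesR : series_ring.

Definition cst (c : CC) : series := mono c 0 0.
Definition Xs : series := mono C1 1 0.
Definition Ys : series := mono C1 0 1.

Lemma mono_mul : forall c d m n p q, smul (mono c m n) (mono d p q) = mono (Cmul c d) (m + p) (n + q).
Proof.
  intros. apply sext; intros i j. rewrite smul_mono_l, !mono_val.
  destruct (Nat.leb_spec m i), (Nat.leb_spec n j); cbn [andb];
  destruct (Nat.eqb_spec (i - m) p), (Nat.eqb_spec (j - n) q), (Nat.eqb_spec i (m+p)), (Nat.eqb_spec j (n+q));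
  cbn [andb]; try ring; lia.
Qed.

Lemma mono_S_x : forall c m n, mono c (S m) n = smul Xs (mono c m n).
Proof. intros. unfold Xs. rewrite mono_mul. simpl. f_equal. ring. Qed.
Lemma mono_S_y : forall c n, mono c 0 (S n) = smul Ys (mono c 0 n).
Proof. intros. unfold Ys. rewrite mono_mul. simpl. f_equal. ring. Qed.

Lemma cst_add : forall a b, cst (Cadd a b) = sadd (cst a) (cst b).
Proof. intros; apply sext; intros; unfold cst, sadd; rewrite !mono_val.
  destruct (andb _ _); ring. Qed.
Lemma cst_mul : forall a b, cst (Cmul a b) = smul (cst a) (cst b).
Proof. intros; unfold cst; rewrite mono_mul; reflexivity. Qed.
Lemma cst_opp : forall a, cst (Copp a) = sopp (cst a).
Proof. intros; apply sext; intros; unfold cst, sopp; rewrite !mono_val.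
  destruct (andb _ _); ring. Qed.
Lemma cst_1 : cst C1 = sone.
Proof. reflexivity. Qed.
Lemma cst_0 : cst C0 = szero.
Proof. apply sext; intros; unfold cst, szero; rewrite mono_val; destruct (andb _ _); reflexivity. Qed.

Lemma sdx_add : forall F G, sdx (sadd F G) = sadd (sdx F) (sdx G).
Proof. intros; apply sext; intros; unfold sdx, sadd; ring. Qed.
Lemma sdy_add : forall F G, sdy (sadd F G) = sadd (sdy F) (sdy G).
Proof. intros; apply sext; intros; unfold sdy, sadd; ring. Qed.
Lemma sdx_opp : forall F, sdx (sopp F) = sopp (sdx F).
Proof. intros; apply sext; intros; unfold sdx, sopp; ring. Qed.
Lemma sdy_opp : forall F, sdy (sopp F) = sopp (sdy F).
Proof. intros; apply sext; intros; unfold sdy, sopp; ring. Qed.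
Lemma sdx_cst : forall c, sdx (cst c) = szero.
Proof. intros; apply sext; intros; unfold sdx, cst, szero; rewrite mono_val; simpl; ring. Qed.
Lemma sdy_cst : forall c, sdy (cst c) = szero.
Proof. intros; apply sext; intros; unfold sdy, cst, szero; rewrite mono_val; simpl.
  destruct (Nat.eqb i 0); simpl; ring. Qed.
Lemma sdx_X : sdx Xs = sone.
Proof. apply sext; intros i j; unfold sdx, Xs, sone; rewrite !mono_val.
  destruct i as [|i]; simpl; [destruct (Nat.eqb j 0); Ceq; ring|].
  destruct i; simpl; ring. Qed.
Lemma sdy_X : sdy Xs = szero.
Proof. apply sext; intros i j; unfold sdy, Xs, szero; rewrite !mono_val. simpl.
  destruct (Nat.eqb i 1); simpl; ring. Qed.
Lemma sdx_Y : sdx Ys = szero.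
Proof. apply sext; intros i j; unfold sdx, Ys, szero; rewrite !mono_val. simpl. ring. Qed.
Lemma sdy_Y : sdy Ys = sone.
Proof. apply sext; intros i j; unfold sdy, Ys, sone; rewrite !mono_val.
  destruct j as [|j]; simpl; [destruct (Nat.eqb i 0); Ceq; ring|].
  destruct j; destruct (Nat.eqb i 0); simpl; ring. Qed.

Definition Dv (P Q F : series) : series := sadd (smul (sdx F) P) (smul (sdy F) Q).

Section Der.
Variables P Q : series.
Lemma Dv_add : forall F G, Dv P Q (sadd F G) = sadd (Dv P Q F) (Dv P Q G).
Proof. intros; unfold Dv; rewrite sdx_add, sdy_add; ring. Qed.
Lemma Dv_opp : forall F, Dv P Q (sopp F) = sopp (Dv P Q F).
Proof. intros; unfold Dv; rewrite sdx_opp, sdy_opp; ring. Qed.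
Lemma Dv_mul : forall F G, Dv P Q (smul F G) = sadd (smul (Dv P Q F) G) (smul F (Dv P Q G)).
Proof. intros; unfold Dv; rewrite sdx_leib, sdy_leib; ring. Qed.
Lemma Dv_cst : forall c, Dv P Q (cst c) = szero.
Proof. intros; unfold Dv; rewrite sdx_cst, sdy_cst; ring. Qed.
Lemma Dv_X : Dv P Q Xs = P.
Proof. unfold Dv; rewrite sdx_X, sdy_X; ring. Qed.
Lemma Dv_Y : Dv P Q Ys = Q.
Proof. unfold Dv; rewrite sdx_Y, sdy_Y; ring. Qed.
End Der.

Lemma test : forall j : CC, smul (cst j) (cst j) = sopp sone ->
  smul (sadd Xs (smul (cst j) Ys)) (ssub Xs (smul (cst j) Ys)) = sadd (smul Xs Xs) (smul Ys Ys).
Proof. intros j H. ring [H]. Qed.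

Lemma Cnorm_ge0 : forall z, 0 <= Cnorm z.
Proof. intros; unfold Cnorm; apply sqrt_pos. Qed.
Lemma Cnorm_C0 : Cnorm C0 = 0.
Proof. unfold Cnorm, C0; simpl. replace (0*0+0*0) with 0 by ring. apply sqrt_0. Qed.
Lemma Cnorm_C1 : Cnorm C1 = 1.
Proof. unfold Cnorm, C1; simpl. replace (1*1+0*0) with 1 by ring. apply sqrt_1. Qed.
Lemma Cnorm_mul : forall z w, Cnorm (Cmul z w) = Cnorm z * Cnorm w.
Proof. intros [a b] [c d]; unfold Cnorm, Cmul; simpl.
  rewrite <- sqrt_mult_alt by nra. f_equal. ring. Qed.
Lemma Cnorm_opp : forall z, Cnorm (Copp z) = Cnorm z.
Proof. intros [a b]; unfold Cnorm, Copp; simpl. f_equal; ring. Qed.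
Lemma Cnorm_add : forall z w, Cnorm (Cadd z w) <= Cnorm z + Cnorm w.
Proof. intros [a b] [c d]; unfold Cnorm, Cadd; simpl.
  set (A := a*a+b*b). set (B := c*c+d*d).
  assert (HA : 0 <= A) by (unfold A; nra). assert (HB : 0 <= B) by (unfold B; nra).
  assert (sA := sqrt_pos A). assert (sB := sqrt_pos B).
  assert (EA := sqrt_sqrt A HA). assert (EB := sqrt_sqrt B HB).
  assert (Hcs : a*c+b*d <= sqrt A * sqrt B).
  { destruct (Rle_dec (a*c+b*d) 0); [nra|].
    assert ((a*c+b*d)*(a*c+b*d) <= A * B) by (unfold A, B; pose proof (Rle_0_sqr (a*d-b*c)); unfold Rsqr in *; nra).
    rewrite <- sqrt_mult by auto.
    rewrite <- (sqrt_square (a*c+b*d)) by lra. apply sqrt_le_1_alt. lra. }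
  rewrite <- (sqrt_square (sqrt A + sqrt B)) by lra. apply sqrt_le_1_alt.
  unfold A, B in *. nra.
Qed.
Lemma Cnorm_natC : forall n, Cnorm (natC n) = INR n.
Proof. intros; unfold Cnorm, natC; simpl. replace (INR n * INR n + 0*0) with (INR n * INR n) by ring.
  apply sqrt_square. apply pos_INR. Qed.

Lemma Csum_norm : forall n f, Cnorm (Csum n f) <= Rsum n (fun a => Cnorm (f a)).
Proof. induction n; intros; simpl. rewrite Cnorm_C0; lra.
  eapply Rle_trans; [apply Cnorm_add|]. specialize (IHn f). lra. Qed.

Definition bnd (F : series) (M K : R) := forall i j, Cnorm (F i j) <= M * K ^ (i + j).
Definition conv (F : series) := exists M K, 1 <= K /\ bnd F M K.

Lemma conv_convergent : forall F, conv F -> convergent F.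
Proof.
  intros F [M [K [HK HB]]]. exists (/ K), M. split; [apply Rinv_0_lt_compat; lra|].
  intros i j. specialize (HB i j).
  assert (0 <= (/K)^(i+j)) by (apply pow_le; left; apply Rinv_0_lt_compat; lra).
  apply Rle_trans with (M * K^(i+j) * (/K)^(i+j)); [apply Rmult_le_compat_r; auto|].
  rewrite Rmult_assoc, <- Rpow_mult_distr, Rinv_r by lra. rewrite pow1. lra.
Qed.

Lemma bnd_M_ge0 : forall F M K, bnd F M K -> 0 <= M.
Proof. intros F M K H. specialize (H 0%nat 0%nat). simpl in H. assert (T:=Cnorm_ge0 (F 0%nat 0%nat)). lra. Qed.

Lemma bnd_weaken : forall F M K M' K', bnd F M K -> 1 <= K -> K <= K' -> M <= M' -> bnd F M' K'.
Proof. intros F M K M' K' H HK HKK HM i j. eapply Rle_trans; [apply H|].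
  assert (0 <= M) by (eapply bnd_M_ge0; eauto).
  assert (K^(i+j) <= K'^(i+j)) by (apply pow_incr; lra).
  assert (0 <= K^(i+j)) by (apply pow_le; lra).
  assert (1 <= K'^(i+j)) by (apply pow_R1_Rle; lra). nra. Qed.

Lemma conv_add : forall F G, conv F -> conv G -> conv (sadd F G).
Proof. intros F G [M [K [HK HF]]] [M' [K' [HK' HG]]].
  exists (M + M'), (Rmax K K'). split; [eapply Rle_trans; [apply HK| apply Rmax_l]|].
  apply (bnd_weaken F M K M (Rmax K K')) in HF; auto; try lra; try apply Rmax_l.
  apply (bnd_weaken G M' K' M' (Rmax K K')) in HG; auto; try lra; try apply Rmax_r.
  intros i j. unfold sadd. eapply Rle_trans; [apply Cnorm_add|].
  specialize (HF i j); specialize (HG i j). lra. Qed.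

Lemma conv_opp : forall F, conv F -> conv (sopp F).
Proof. intros F [M [K [HK HF]]]. exists M, K. split; auto. intros i j; unfold sopp; rewrite Cnorm_opp; auto. Qed.

Lemma INR_le_pow2 : forall n, INR (S n) <= 2 ^ n.
Proof. induction n. simpl; lra. rewrite S_INR. cbn [pow]. assert (1 <= 2^n) by (apply pow_R1_Rle; lra). lra. Qed.

Lemma bnd_mul : forall F G M M' K, 1 <= K -> bnd F M K -> bnd G M' K -> bnd (smul F G) (M * M') (2 * K).
Proof.
  intros F G M M' K HK HF HG i j. unfold smul.
  assert (HM := bnd_M_ge0 _ _ _ HF). assert (HM' := bnd_M_ge0 _ _ _ HG).
  eapply Rle_trans; [apply Csum_norm|].
  apply Rle_trans with (Rsum (S i) (fun a => Rsum (S j) (fun b => M * M' * K^(i+j)))).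
  - apply Rsum_le; intros a Ha. eapply Rle_trans; [apply Csum_norm|].
    apply Rsum_le; intros b Hb. rewrite Cnorm_mul.
    specialize (HF a b); specialize (HG (i-a)%nat (j-b)%nat).
    replace (K^(i+j)) with (K^(a+b) * K^((i-a)+(j-b))) by (rewrite <- pow_add; f_equal; lia).
    assert (0 <= Cnorm (F a b)) by apply Cnorm_ge0.
    assert (0 <= Cnorm (G (i-a)%nat (j-b)%nat)) by apply Cnorm_ge0.
    replace (M * M' * (K ^ (a + b) * K ^ (i - a + (j - b))))
      with ((M * K^(a+b)) * (M' * K^(i - a + (j - b)))) by ring.
    apply Rmult_le_compat; auto.
  - rewrite !Rsum_const. rewrite Rpow_mult_distr, pow_add.
    assert (A1 := INR_le_pow2 i). assert (A2 := INR_le_pow2 j).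
    assert (0 <= K^(i+j)) by (apply pow_le; lra). rewrite pow_add in *.
    assert (0 <= K^i) by (apply pow_le; lra). assert (0 <= K^j) by (apply pow_le; lra).
    assert (0 <= M * M') by nra. assert (0 <= INR (S i)) by apply pos_INR.
    assert (0 <= INR (S j)) by apply pos_INR.
    assert (0 <= M*M'*(K^i*K^j)) by (apply Rmult_le_pos; nra).
    replace (M * M' * (2 ^ i * 2 ^ j * (K ^ i * K ^ j))) with ((2^i * 2^j) * (M*M'*(K^i*K^j))) by ring.
    replace (INR (S i) * (INR (S j) * (M * M' * (K ^ i * K ^ j)))) with ((INR (S i) * INR (S j)) * (M*M'*(K^i*K^j))) by ring.
    apply Rmult_le_compat_r; auto. apply Rmult_le_compat; auto.
Qed.

Lemma conv_mul : forall F G, conv F -> conv G -> conv (smul F G).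
Proof. intros F G [M [K [HK HF]]] [M' [K' [HK' HG]]].
  set (K0 := Rmax K K').
  assert (H0 : 1 <= K0) by (eapply Rle_trans; [apply HK| apply Rmax_l]).
  apply (bnd_weaken F M K M K0) in HF; auto; try lra; try apply Rmax_l.
  apply (bnd_weaken G M' K' M' K0) in HG; auto; try lra; try apply Rmax_r.
  exists (M * M'), (2 * K0). split; [lra|]. apply bnd_mul; auto. Qed.

Lemma conv_mono : forall c m n, conv (mono c m n).
Proof. intros. exists (Cnorm c), 1. split; [lra|]. intros i j. rewrite pow1, mono_val.
  destruct (andb _ _); [lra|]. rewrite Cnorm_C0. rewrite Rmult_1_r. apply Cnorm_ge0. Qed.

Lemma conv_cst : forall c, conv (cst c).
Proof. intros; apply conv_mono. Qed.
Lemma conv_X : conv Xs. Proof. apply conv_mono. Qed.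
Lemma conv_Y : conv Ys. Proof. apply conv_mono. Qed.
Lemma conv_sone : conv sone. Proof. apply conv_mono. Qed.

Fixpoint polyL (l : list (CC * nat * nat)) : series :=
  match l with nil => szero | (c, m, n) :: r => sadd (mono c m n) (polyL r) end.
Fixpoint goodL (l : list (CC * nat * nat)) : Prop :=
  match l with nil => True | (c, m, n) :: r => (1 <= m + n)%nat /\ goodL r end.
Fixpoint spow (F : series) (k : nat) : series :=
  match k with O => sone | S k => smul F (spow F k) end.
Definition Gl l := sopp (polyL l).
Fixpoint Tn l (N : nat) : series :=
  match N with O => sone | S N => sadd (Tn l N) (spow (Gl l) (S N)) end.
Definition sinv l : series := fun i j => Tn l (i + j) i j.

Lemma polyL_00 : forall l, goodL l -> polyL l 0%nat 0%nat = C0.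
Proof. induction l as [|[[c m] n] r IH]; simpl; intros; [reflexivity|].
  destruct H. unfold sadd. rewrite IH by auto. rewrite mono_val.
  destruct (Nat.eqb_spec 0 m), (Nat.eqb_spec 0 n); simpl; try ring; lia. Qed.

Lemma spow_low : forall l, goodL l -> forall k i j, (i + j < k)%nat -> spow (Gl l) k i j = C0.
Proof.
  intros l Hl. induction k; intros i j Hk; [lia|]. simpl. unfold smul.
  apply Csum_zero; intros a Ha; apply Csum_zero; intros b Hb.
  destruct (Nat.eq_dec a 0), (Nat.eq_dec b 0).
  - subst. unfold Gl, sopp. rewrite polyL_00 by auto. ring.
  - rewrite IHk by lia. ring.
  - rewrite IHk by lia. ring.
  - rewrite IHk by lia. ring.
Qed.

Lemma Tn_stable : forall l, goodL l -> forall d N i j, (i + j <= N)%nat -> Tn l (N + d) i j = Tn l N i j.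
Proof. intros l Hl. induction d; intros N i j H. rewrite Nat.add_0_r; auto.
  rewrite Nat.add_succ_r. cbn [Tn]. unfold sadd. rewrite IHd by auto. rewrite spow_low by (auto; lia). ring. Qed.

Lemma Tn_prod : forall l N, smul (sadd sone (polyL l)) (Tn l N) = ssub sone (spow (Gl l) (S N)).
Proof. intros l N. induction N.
  - simpl. unfold Gl. ring.
  - change (Tn l (S N)) with (sadd (Tn l N) (spow (Gl l) (S N))).
    change (spow (Gl l) (S (S N))) with (smul (Gl l) (spow (Gl l) (S N))).
    rewrite smul_addr, IHN. unfold Gl. ring.
Qed.

Lemma smul_local : forall A F F' i j, (forall a b, (a <= i)%nat -> (b <= j)%nat -> F a b = F' a b) ->
  smul A F i j = smul A F' i j.
Proof. intros. unfold smul. apply Csum_ext; intros a Ha; apply Csum_ext; intros b Hb.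
  rewrite H by lia. reflexivity. Qed.

Lemma sinv_spec : forall l, goodL l -> smul (sadd sone (polyL l)) (sinv l) = sone.
Proof.
  intros l Hl. apply sext; intros i j.
  rewrite (smul_local _ (sinv l) (Tn l (i + j))).
  - rewrite Tn_prod. unfold ssub, sadd, sopp. rewrite spow_low by (auto; lia). ring.
  - intros a b Ha Hb. unfold sinv.
    replace (i + j)%nat with (a + b + (i + j - (a + b)))%nat by lia.
    rewrite (Tn_stable l Hl (i + j - (a + b)) (a + b) a b) by lia. reflexivity.
Qed.

Fixpoint lsum (l : list (CC * nat * nat)) (F : series) (i j : nat) : CC :=
  match l with nil => C0
  | (c, m, n) :: r => Cadd (if andb (Nat.leb m i) (Nat.leb n j) then Cmul c (F (i - m)%nat (j - n)%nat) else C0)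
                        (lsum r F i j) end.
Lemma polyL_mul : forall l F i j, smul (polyL l) F i j = lsum l F i j.
Proof. induction l as [|[[c m] n] r IH]; intros; simpl.
  - unfold smul, szero. apply Csum_zero; intros; apply Csum_zero; intros; ring.
  - rewrite smul_addl. unfold sadd. rewrite smul_mono_l, IH. reflexivity. Qed.

Fixpoint Sl (l : list (CC * nat * nat)) : R :=
  match l with nil => 0 | (c, m, n) :: r => Cnorm c + Sl r end.
Lemma Sl_ge0 : forall l, 0 <= Sl l.
Proof. induction l as [|[[c m] n] r IH]; simpl; [lra|]. assert (T:=Cnorm_ge0 c). lra. Qed.

Lemma lsum_zero : forall l F, goodL l -> lsum l F 0%nat 0%nat = C0.
Proof. induction l as [|[[c m] n] r IH]; intros F Hl; simpl; [reflexivity|]. destruct Hl.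
  rewrite IH by auto. destruct (Nat.leb_spec m 0), (Nat.leb_spec n 0); simpl; try ring; lia. Qed.

Lemma lsum_bound : forall l F i j B, goodL l -> 0 <= B ->
  (forall a b, (a + b < i + j)%nat -> Cnorm (F a b) <= B) -> Cnorm (lsum l F i j) <= Sl l * B.
Proof. induction l as [|[[c m] n] r IH]; intros F i j B Hl HB H; simpl.
  - rewrite Cnorm_C0. lra.
  - destruct Hl. eapply Rle_trans; [apply Cnorm_add|].
    assert (Cnorm (lsum r F i j) <= Sl r * B) by (apply IH; auto).
    assert (Cnorm (if andb (Nat.leb m i) (Nat.leb n j) then Cmul c (F (i - m)%nat (j - n)%nat) else C0) <= Cnorm c * B).
    { destruct (Nat.leb_spec m i), (Nat.leb_spec n j); simpl; try (rewrite Cnorm_C0; assert (T:=Cnorm_ge0 c); nra).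
      rewrite Cnorm_mul. apply Rmult_le_compat_l; [apply Cnorm_ge0|]. apply H. lia. }
    lra.
Qed.

Lemma sinv_bound : forall l, goodL l -> bnd (sinv l) 1 (1 + Sl l).
Proof.
  intros l Hl.
  assert (E : sinv l = ssub sone (smul (polyL l) (sinv l))).
  { transitivity (ssub (smul (sadd sone (polyL l)) (sinv l)) (smul (polyL l) (sinv l))); [ring|].
    rewrite sinv_spec by auto. reflexivity. }
  assert (HS := Sl_ge0 l). set (C := 1 + Sl l).
  assert (HC : 1 <= C) by (unfold C; lra).
  intros i j. rewrite Rmult_1_l.
  remember (i + j)%nat as n eqn:Hn. revert i j Hn.
  induction n as [n IHn] using (well_founded_induction Wf_nat.lt_wf). intros i j Hn.
  rewrite E. unfold ssub, sadd, sopp. rewrite polyL_mul.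
  eapply Rle_trans; [apply Cnorm_add|]. rewrite Cnorm_opp.
  destruct n as [|n].
  - assert (i = 0%nat) by lia; assert (j = 0%nat) by lia; subst.
    rewrite lsum_zero by auto. unfold sone; rewrite mono_val; simpl.
    rewrite Cnorm_C1, Cnorm_C0. lra.
  - assert (Hs : sone i j = C0).
    { unfold sone; rewrite mono_val. destruct (Nat.eqb_spec i 0), (Nat.eqb_spec j 0); simpl; auto; lia. }
    rewrite Hs, Cnorm_C0.
    assert (Cnorm (lsum l (sinv l) i j) <= Sl l * C ^ n).
    { apply lsum_bound; auto. apply pow_le; lra. intros a b Hab.
      eapply Rle_trans; [apply (IHn (a + b)%nat) ; auto; lia|]. apply Rle_pow; auto; lia. }
    simpl. assert (0 <= C^n) by (apply pow_le; lra). unfold C in *. nra.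
Qed.

Lemma conv_sinv : forall l, goodL l -> conv (sinv l).
Proof. intros. exists 1, (1 + Sl l). split; [assert (T:=Sl_ge0 l); lra|]. apply sinv_bound; auto. Qed.

Lemma Dv_one : forall P Q, Dv P Q sone = szero.
Proof. intros. apply (Dv_cst P Q C1). Qed.

Section Quot.
Variables P Q Dn I : series.
Hypothesis HI : smul Dn I = sone.

Lemma Dv_inv : Dv P Q I = sopp (smul (smul I I) (Dv P Q Dn)).
Proof.
  assert (H0: sadd (smul (Dv P Q Dn) I) (smul Dn (Dv P Q I)) = szero)
    by (rewrite <- Dv_mul, HI; apply Dv_one).
  assert (H1: smul Dn (Dv P Q I) = sopp (smul (Dv P Q Dn) I)).
  { transitivity (ssub (sadd (smul (Dv P Q Dn) I) (smul Dn (Dv P Q I))) (smul (Dv P Q Dn) I)); [ring|].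
    rewrite H0; ring. }
  transitivity (smul (Dv P Q I) (smul Dn I)); [rewrite HI; ring|].
  transitivity (smul I (smul Dn (Dv P Q I))); [ring|]. rewrite H1. ring.
Qed.

Lemma quot1 : forall N R,
  ssub (ssub (smul (Dv P Q N) Dn) (smul N (Dv P Q Dn))) (smul R Dn) = szero ->
  Dv P Q (smul N I) = smul R I.
Proof.
  intros N R HE.
  assert (X: ssub (Dv P Q (smul N I)) (smul R I) =
     sadd (smul (smul I I) (ssub (ssub (smul (Dv P Q N) Dn) (smul N (Dv P Q Dn))) (smul R Dn)))
          (smul (smul (ssub (Dv P Q N) R) I) (ssub sone (smul Dn I)))).
  { rewrite Dv_mul, Dv_inv. ring. }
  rewrite HE, HI in X.
  transitivity (sadd (ssub (Dv P Q (smul N I)) (smul R I)) (smul R I)); [ring|].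
  rewrite X. ring.
Qed.

Lemma quot2 : forall N R,
  ssub (ssub (smul (Dv P Q N) Dn) (smul (sadd N N) (Dv P Q Dn))) (smul R Dn) = szero ->
  Dv P Q (smul N (smul I I)) = smul R (smul I I).
Proof.
  intros N R HE.
  assert (X: ssub (Dv P Q (smul N (smul I I))) (smul R (smul I I)) =
     sadd (smul (smul I (smul I I)) (ssub (ssub (smul (Dv P Q N) Dn) (smul (sadd N N) (Dv P Q Dn))) (smul R Dn)))
          (smul (smul (ssub (Dv P Q N) R) (smul I I)) (ssub sone (smul Dn I)))).
  { rewrite !Dv_mul, Dv_inv. ring. }
  rewrite HE, HI in X.
  transitivity (sadd (ssub (Dv P Q (smul N (smul I I))) (smul R (smul I I))) (smul R (smul I I))); [ring|].
  rewrite X. ring.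
Qed.
End Quot.

Lemma lin_of : forall P Q X1 Y1,
  X1 0%nat 0%nat = C0 -> X1 1%nat 0%nat = C1 -> X1 0%nat 1%nat = C0 ->
  Y1 0%nat 0%nat = C0 -> Y1 1%nat 0%nat = C0 -> Y1 0%nat 1%nat = C1 ->
  conv X1 -> conv Y1 -> Dv P Q X1 = sopp Y1 -> Dv P Q Y1 = X1 -> linearizable P Q.
Proof.
  intros P Q X1 Y1 H1 H2 H3 H4 H5 H6 H7 H8 H9 H10. exists X1, Y1.
  repeat split; auto using conv_convergent.
  - intros i j. change (Dv P Q X1 i j = sopp Y1 i j). rewrite H9. reflexivity.
  - intros i j. change (Dv P Q Y1 i j = X1 i j). rewrite H10. reflexivity.
Qed.

Lemma mono00 : forall c, mono c 0 0 = cst c.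
Proof. reflexivity. Qed.

Lemma Pcub_eq : forall a02 a03, Pcub a02 a03 =
  sadd (sopp Ys) (sadd (smul (cst a02) (smul Ys Ys)) (smul (cst a03) (smul Ys (smul Ys Ys)))).
Proof. intros. unfold Pcub. rewrite !mono_S_y, !mono00, cst_opp, cst_1. ring. Qed.

Lemma Qcub_eq : forall b20 b11 b02 b30 b21 b12, Qcub b20 b11 b02 b30 b21 b12 =
  sadd Xs (sadd (smul (cst b20) (smul Xs Xs)) (sadd (smul (cst b11) (smul Xs Ys))
  (sadd (smul (cst b02) (smul Ys Ys)) (sadd (smul (cst b30) (smul Xs (smul Xs Xs)))
  (sadd (smul (cst b21) (smul Xs (smul Xs Ys))) (smul (cst b12) (smul Xs (smul Ys Ys)))))))).
Proof. intros. unfold Qcub. rewrite !mono_S_x, !mono_S_y, !mono00, cst_1. ring. Qed.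

Lemma cst_natC_S : forall n, cst (natC (S n)) = sadd (cst (natC n)) sone.
Proof. intros. rewrite natC_S, cst_add, cst_1. reflexivity. Qed.
Lemma cst_natC_0 : cst (natC 0) = szero.
Proof. rewrite natC_0. apply cst_0. Qed.

Lemma smul_10 : forall F G, smul F G 1%nat 0%nat =
  Cadd (Cmul (F 0%nat 0%nat) (G 1%nat 0%nat)) (Cmul (F 1%nat 0%nat) (G 0%nat 0%nat)).
Proof. intros. unfold smul. simpl. ring. Qed.
Lemma smul_01 : forall F G, smul F G 0%nat 1%nat =
  Cadd (Cmul (F 0%nat 0%nat) (G 0%nat 1%nat)) (Cmul (F 0%nat 1%nat) (G 0%nat 0%nat)).
Proof. intros. unfold smul. simpl. ring. Qed.

Lemma sinv_00 : forall l, sinv l 0%nat 0%nat = C1.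
Proof. reflexivity. Qed.
Lemma sinv_10 : forall l, goodL l -> sinv l 1%nat 0%nat = Copp (polyL l 1%nat 0%nat).
Proof. intros l Hl. assert (H := f_equal (fun F => F 1%nat 0%nat) (sinv_spec l Hl)). simpl in H.
  rewrite smul_10 in H. unfold sadd in H. rewrite polyL_00 in H by auto. rewrite sinv_00 in H.
  unfold sone in H. rewrite !mono_val in H. simpl in H.
  transitivity (Cadd (Cadd (Cmul (Cadd C1 C0) (sinv l 1%nat 0%nat)) (Cmul (Cadd C0 (polyL l 1%nat 0%nat)) C1))
     (Copp (polyL l 1%nat 0%nat))); [ring|]. rewrite H. ring. Qed.
Lemma sinv_01 : forall l, goodL l -> sinv l 0%nat 1%nat = Copp (polyL l 0%nat 1%nat).
Proof. intros l Hl. assert (H := f_equal (fun F => F 0%nat 1%nat) (sinv_spec l Hl)). simpl in H.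
  rewrite smul_01 in H. unfold sadd in H. rewrite polyL_00 in H by auto. rewrite sinv_00 in H.
  unfold sone in H. rewrite !mono_val in H. simpl in H.
  transitivity (Cadd (Cadd (Cmul (Cadd C1 C0) (sinv l 0%nat 1%nat)) (Cmul (Cadd C0 (polyL l 0%nat 1%nat)) C1))
     (Copp (polyL l 0%nat 1%nat))); [ring|]. rewrite H. ring. Qed.

Ltac conv_tac := repeat match goal with
 | |- conv (sadd _ _) => apply conv_add
 | |- conv (smul _ _) => apply conv_mul
 | |- conv (sopp _) => apply conv_opp
 | |- conv (ssub _ _) => apply conv_add; [|apply conv_opp]
 | |- conv (cst _) => apply conv_cst
 | |- conv Xs => apply conv_X
 | |- conv Ys => apply conv_Y
 | |- conv sone => apply conv_sone
 | |- conv (sinv _) => apply conv_sinv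
 end.

Ltac Dv_tac := repeat first [ rewrite Dv_add | rewrite Dv_mul | rewrite Dv_opp | rewrite Dv_cst
  | rewrite Dv_one | rewrite Dv_X | rewrite Dv_Y ].

Ltac cst_tac := repeat first [ rewrite cst_natC_S | rewrite cst_natC_0 | rewrite cst_add | rewrite cst_mul
  | rewrite cst_opp | rewrite cst_1 | rewrite cst_0 ].

Lemma case2 (b11 b30 : CC) : Cadd (Cmul (natC 9) b30) (Copp (Cmul b11 b11)) = C0 ->
  linearizable (Pcub C0 C0) (Qcub C0 b11 C0 b30 C0 C0).
Proof.
  intro H.
  set (k := mkC (Cre b11 / 3) (Cim b11 / 3)).
  assert (Hb11 : b11 = Cmul (natC 3) k) by (unfold k; Ceq; simpl; field).
  assert (Hb30 : b30 = Cmul k k).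
  { unfold k; destruct b11 as [u v], b30 as [p q]; unfold natC, Cmul, Cadd, Copp, C0 in *; simpl in *.
    injection H; intros H1 H2. apply CC_ext; simpl in *; nra. }
  clearbody k. clear H. subst b11 b30.
  set (l := [(k, 0%nat, 1%nat); (Cmul k k, 2%nat, 0%nat)]).
  assert (Hl : goodL l) by (simpl; repeat split; lia).
  assert (HI := sinv_spec l Hl).
  assert (Hp : polyL l = sadd (smul (cst k) Ys) (smul (cst (Cmul k k)) (smul Xs Xs))).
  { unfold l; simpl polyL. rewrite !mono_S_x, !mono_S_y, !mono00. ring. }
  rewrite Hp in HI.
  set (Iv := sinv l) in *.
  apply lin_of with (X1 := smul Xs Iv) (Y1 := smul (sadd Ys (smul (cst k) (smul Xs Xs))) Iv).
  all: try (rewrite ?smul_00, ?smul_10, ?smul_01; unfold Iv; rewrite ?sinv_00, ?sinv_10, ?sinv_01 by auto;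
            unfold l, sadd, sopp, smul, Xs, Ys, cst, sone, mono, polyL; simpl; ring).
  - unfold Iv. apply conv_mul. apply conv_X. apply conv_sinv. exact Hl.
  - unfold Iv; conv_tac; eassumption.
  - rewrite Pcub_eq, Qcub_eq.
    replace (sopp (smul (sadd Ys (smul (cst k) (smul Xs Xs))) Iv))
      with (smul (sopp (sadd Ys (smul (cst k) (smul Xs Xs)))) Iv) by ring.
    apply quot1 with (1 := HI). Dv_tac. cst_tac. ring.
  - rewrite Pcub_eq, Qcub_eq.
    apply quot1 with (1 := HI). Dv_tac. cst_tac. ring.
Qed.

Ltac coef_tac Iv l := repeat first [rewrite smul_00 | rewrite smul_10 | rewrite smul_01]; unfold Iv;
  rewrite ?sinv_00, ?sinv_10, ?sinv_01 by assumption;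
  unfold l, sadd, sopp, smul, Xs, Ys, cst, sone, mono, polyL; simpl; ring.

Lemma case3 (a03 b02 : CC) : Cadd (Cmul (natC 9) a03) (Cmul (natC 4) (Cmul b02 b02)) = C0 ->
  linearizable (Pcub C0 a03) (Qcub C0 C0 b02 C0 C0 C0).
Proof.
  intro H.
  set (c := mkC (Cre b02 / 3) (Cim b02 / 3)).
  assert (Hb02 : b02 = Cmul (natC 3) c) by (unfold c; Ceq; simpl; field).
  assert (Ha03 : a03 = Copp (Cmul (natC 4) (Cmul c c))).
  { unfold c; destruct b02 as [u v], a03 as [p q]; unfold natC, Cmul, Cadd, Copp, C0 in *; simpl in *.
    injection H; intros H1 H2. apply CC_ext; simpl in *; nra. }
  clearbody c. clear H. subst b02 a03.
  set (l := [(Copp (Cmul (natC 2) c), 1%nat, 0%nat); (Copp (Cmul (natC 2) (Cmul c c)), 0%nat, 2%nat)]).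
  assert (Hl : goodL l) by (simpl; repeat split; lia).
  assert (HI := sinv_spec l Hl).
  assert (Hp : polyL l = sadd (smul (cst (Copp (Cmul (natC 2) c))) Xs)
                               (smul (cst (Copp (Cmul (natC 2) (Cmul c c)))) (smul Ys Ys))).
  { unfold l; simpl polyL. rewrite !mono_S_x, !mono_S_y, !mono00. ring. }
  rewrite Hp in HI.
  set (Iv := sinv l) in *.
  apply lin_of with (X1 := smul (sadd Xs (smul (cst c) (smul Ys Ys))) Iv) (Y1 := smul Ys Iv).
  all: try (coef_tac Iv l).
  - unfold Iv; conv_tac; eassumption.
  - unfold Iv; conv_tac; eassumption.
  - rewrite Pcub_eq, Qcub_eq.
    replace (sopp (smul Ys Iv)) with (smul (sopp Ys) Iv) by ring.
    apply quot1 with (1 := HI). Dv_tac. cst_tac. ring.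
  - rewrite Pcub_eq, Qcub_eq.
    apply quot1 with (1 := HI). Dv_tac. cst_tac. ring.
Qed.

Lemma case4 (j u : CC) : Cmul j j = Copp C1 ->
  linearizable (Pcub (Cmul (natC 9) (Cmul j u)) C0)
               (Qcub (Cmul (natC 12) u) (Cmul (natC 30) (Cmul j u)) (Copp (Cmul (natC 30) u)) C0 C0 C0).
Proof.
  intro Hj.
  assert (Hj' : smul (cst j) (cst j) = sopp sone) by (rewrite <- cst_mul, Hj, cst_opp, cst_1; reflexivity).
  set (l := [(Cmul (natC 12) u, 1%nat, 0%nat); (Cmul (natC 6) (Cmul u j), 0%nat, 1%nat)]).
  assert (Hl : goodL l) by (simpl; repeat split; lia).
  assert (HI := sinv_spec l Hl).
  assert (Hp : polyL l = sadd (smul (cst (Cmul (natC 12) u)) Xs)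
                               (smul (cst (Cmul (natC 6) (Cmul u j))) Ys)).
  { unfold l; simpl polyL. rewrite !mono_S_x, !mono_S_y, !mono00. ring. }
  rewrite Hp in HI.
  set (Iv := sinv l) in *.
  set (p := sadd (smul (cst (natC 2)) Xs) (smul (cst j) Ys)).
  apply lin_of with (X1 := smul (sadd Xs (smul (cst (Cmul (natC 2) u)) (smul p p))) (smul Iv Iv))
                    (Y1 := smul (sadd Ys (smul (cst (Cmul j u)) (smul p p))) (smul Iv Iv)).
  all: try (unfold p; coef_tac Iv l).

  - unfold Iv, p; conv_tac; eassumption.
  - unfold Iv, p; conv_tac; eassumption.
  - rewrite Pcub_eq, Qcub_eq.
    replace (sopp (smul (sadd Ys (smul (cst (Cmul j u)) (smul p p))) (smul Iv Iv)))
      with (smul (sopp (sadd Ys (smul (cst (Cmul j u)) (smul p p)))) (smul Iv Iv)) by ring.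
    apply quot2 with (1 := HI). unfold p. Dv_tac. cst_tac. ring [Hj'].
  - rewrite Pcub_eq, Qcub_eq.
    apply quot2 with (1 := HI). unfold p. Dv_tac. cst_tac. ring [Hj'].
Qed.

Lemma Cb_n0 : forall n, C n 0 = 1.
Proof. intro n. unfold C. rewrite Nat.sub_0_r. simpl. field. apply INR_fact_neq_0. Qed.
Lemma Cb_nn : forall n, C n n = 1.
Proof. intro n. unfold C. rewrite Nat.sub_diag. simpl. field. apply INR_fact_neq_0. Qed.
Lemma Cb_dx : forall p q, INR (S p) * C (S (p + q)) (S p) = INR (S (p + q)) * C (p + q) p.
Proof. intros. unfold C. replace (S (p + q) - S p)%nat with q by lia.
  replace (p + q - p)%nat with q by lia. rewrite !fact_simpl, !mult_INR.
  assert (T1 := INR_fact_neq_0 p). assert (T2 := INR_fact_neq_0 q).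
  assert (INR (S p) <> 0) by (apply not_0_INR; lia). field; auto. Qed.
Lemma Cb_dy : forall p q, INR (S q) * C (S (p + q)) p = INR (S (p + q)) * C (p + q) p.
Proof. intros. unfold C. replace (S (p + q) - p)%nat with (S q) by lia.
  replace (p + q - p)%nat with q by lia. rewrite !fact_simpl, !mult_INR.
  assert (T1 := INR_fact_neq_0 p). assert (T2 := INR_fact_neq_0 q).
  assert (INR (S q) <> 0) by (apply not_0_INR; lia). field; auto. Qed.
Lemma Cb_bound : forall n k, (k <= n)%nat -> 0 <= C n k <= 2 ^ n.
Proof.
  induction n; intros k Hk.
  - assert (k = 0%nat) by lia; subst. rewrite Cb_n0. simpl; lra.
  - destruct k as [|k].
    + rewrite Cb_n0. split; [lra|]. apply pow_R1_Rle; lra.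
    + destruct (Nat.eq_dec k n) as [->|Hne].
      * rewrite Cb_nn. split; [lra|]. apply pow_R1_Rle; lra.
      * rewrite <- pascal by lia. assert (A := IHn k ltac:(lia)). assert (B := IHn (S k) ltac:(lia)).
        simpl. lra.
Qed.

Fixpoint Cpow (z : CC) (n : nat) : CC := match n with O => C1 | S k => Cmul z (Cpow z k) end.

Definition Hs (j : CC) (f : nat -> CC) : series := fun p q =>
  Cmul (Cmul (f (p + q)%nat) (mkC (C (p + q) p) 0)) (Cpow j q).
Definition der (f : nat -> CC) : nat -> CC := fun n => Cmul (natC (S n)) (f (S n)).
Definition sh (f : nat -> CC) : nat -> CC := fun n => match n with O => C0 | S k => f k end.
Definition e0 : nat -> CC := fun n => match n with O => C1 | S _ => C0 end.

Lemma smul_cst : forall c F i j, smul (cst c) F i j = Cmul c (F i j).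
Proof. intros. unfold cst. rewrite smul_mono_l. simpl. rewrite !Nat.sub_0_r. reflexivity. Qed.

Lemma Hs_dx : forall j f, sdx (Hs j f) = Hs j (der f).
Proof. intros. apply sext; intros p q. unfold sdx, Hs, der. simpl (S p + q)%nat.
  transitivity (Cmul (Cmul (f (S (p + q))) (Cmul (natC (S p)) (mkC (C (S (p + q)) (S p)) 0))) (Cpow j q)); [ring|].
  replace (Cmul (natC (S p)) (mkC (C (S (p + q)) (S p)) 0))
     with (Cmul (natC (S (p + q))) (mkC (C (p + q) p) 0)); [ring|].
  unfold natC, Cmul; cbn [Cre Cim]. apply CC_ext; [|ring]. rewrite <- Cb_dx. ring.
Qed.

Lemma Hs_dy : forall j f, sdy (Hs j f) = smul (cst j) (Hs j (der f)).
Proof. intros. apply sext; intros p q. rewrite smul_cst. unfold sdy, Hs, der.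
  rewrite Nat.add_succ_r. simpl (Cpow j (S q)).
  transitivity (Cmul (Cmul (Cmul (f (S (p + q))) (Cmul (natC (S q)) (mkC (C (S (p + q)) p) 0))) (Cpow j q)) j); [ring|].
  replace (Cmul (natC (S q)) (mkC (C (S (p + q)) p) 0))
     with (Cmul (natC (S (p + q))) (mkC (C (p + q) p) 0)); [ring|].
  unfold natC, Cmul; cbn [Cre Cim]. apply CC_ext; [|ring]. rewrite <- Cb_dy. ring.
Qed.

Lemma Hs_sh : forall j f, Hs j (sh f) = smul (sadd Xs (smul (cst j) Ys)) (Hs j f).
Proof.
  intros. transitivity (sadd (smul Xs (Hs j f)) (smul (cst j) (smul Ys (Hs j f)))); [|ring].
  apply sext; intros p q. unfold sadd. rewrite smul_cst. unfold Xs, Ys. rewrite !smul_mono_l.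
  destruct p as [|p], q as [|q]; simpl andb; cbv iota; unfold Hs, sh.
  - simpl. ring.
  - replace (0 - 0)%nat with 0%nat by lia; replace (S q - 1)%nat with q by lia.
    replace (0 + S q)%nat with (S q) by lia; replace (0 + q)%nat with q by lia.
    rewrite !Cb_n0. simpl Cpow. ring.
  - replace (0 - 0)%nat with 0%nat by lia; replace (S p - 1)%nat with p by lia.
    replace (S p + 0)%nat with (S p) by lia; replace (p + 0)%nat with p by lia.
    rewrite !Cb_nn. simpl Cpow. ring.
  - replace (S q - 0)%nat with (S q) by lia; replace (S p - 0)%nat with (S p) by lia.
    replace (S q - 1)%nat with q by lia; replace (S p - 1)%nat with p by lia.
    replace (S p + S q)%nat with (S (p + S q)) by lia. replace (S p + q)%nat with (p + S q)%nat by lia.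
    rewrite <- pascal by lia. simpl (Cpow j (S q)).
    assert (Ea : forall r1 r2, mkC (r1 + r2) 0 = Cadd (mkC r1 0) (mkC r2 0)) by (intros; unfold Cadd; cbn [Cre Cim]; apply CC_ext; ring).
    rewrite Ea. ring.
Qed.

Lemma Hs_add : forall j f g, Hs j (fun n => Cadd (f n) (g n)) = sadd (Hs j f) (Hs j g).
Proof. intros; apply sext; intros; unfold Hs, sadd; ring. Qed.
Lemma Hs_scal : forall j c f, Hs j (fun n => Cmul c (f n)) = smul (cst c) (Hs j f).
Proof. intros; apply sext; intros; rewrite smul_cst; unfold Hs; ring. Qed.
Lemma Hs_opp : forall j f, Hs j (fun n => Copp (f n)) = sopp (Hs j f).
Proof. intros; apply sext; intros; unfold Hs, sopp; ring. Qed.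
Lemma Hs_e0 : forall j, Hs j e0 = sone.
Proof. intros; apply sext; intros p q. unfold Hs, e0, sone. rewrite mono_val.
  destruct p, q; simpl; try ring. rewrite Cb_n0. Ceq; ring. Qed.

Fixpoint hs (b : CC) (n : nat) : CC :=
  match n with
  | O => C0
  | S n' => Cmul (Cadd (match n' with 1%nat => b | _ => C0 end) (Copp (Cmul b (Cmul (natC n') (hs b n')))))
                 (mkC (/ INR (S (S n'))) 0)
  end.

Lemma hs_1 : forall b, hs b 1 = C0.
Proof. intros. simpl. ring. Qed.

Lemma hs_ode : forall b n, Cadd (sh (der (hs b)) n) (Cmul b (sh (sh (der (hs b))) n)) =
  Cadd (Cmul b (sh (sh e0) n)) (Copp (hs b n)).
Proof.
  intros b n. destruct n as [|[|N]]; unfold sh, der, e0.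
  - simpl. ring.
  - rewrite hs_1. ring.
  - set (X := Cadd (match S N with 1%nat => b | _ => C0 end) (Copp (Cmul b (Cmul (natC (S N)) (hs b (S N)))))).
    assert (Hh : hs b (S (S N)) = Cmul X (mkC (/ INR (S (S (S N)))) 0)) by reflexivity.
    assert (Hc : Cmul (natC (S (S (S N)))) (hs b (S (S N))) = X).
    { rewrite Hh. transitivity (Cmul X (Cmul (mkC (/ INR (S (S (S N)))) 0) (natC (S (S (S N)))))); [ring|].
      rewrite natC_inv. ring. }
    rewrite natC_S in Hc.
    assert (HX : X = Cadd (Cmul b (match N with O => C1 | S _ => C0 end)) (Copp (Cmul b (Cmul (natC (S N)) (hs b (S N)))))).
    { unfold X. destruct N; ring. }
    rewrite HX in Hc.
    transitivity (Cadd (Cadd (Cmul (Cadd (natC (S (S N))) C1) (hs b (S (S N)))) (Cmul b (Cmul (natC (S N)) (hs b (S N)))))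
                       (Copp (hs b (S (S N))))); [ring|].
    rewrite Hc. ring.
Qed.

Lemma Cnorm_mkC : forall r, 0 <= r -> Cnorm (mkC r 0) = r.
Proof. intros. unfold Cnorm; simpl. replace (r * r + 0 * 0) with (r * r) by ring. apply sqrt_square; auto. Qed.

Lemma hs_bound : forall b n, Cnorm (hs b n) <= (1 + Cnorm b) ^ n.
Proof.
  intros b n. set (B := 1 + Cnorm b). assert (Hb := Cnorm_ge0 b).
  induction n as [|n IH].
  - simpl. rewrite Cnorm_C0. lra.
  - cbn [hs]. rewrite Cnorm_mul, Cnorm_mkC by (left; apply Rinv_0_lt_compat, lt_0_INR; lia).
    assert (HBn : 1 <= B ^ n) by (apply pow_R1_Rle; unfold B; lra).
    assert (HX : Cnorm (Cadd (match n with 1%nat => b | _ => C0 end) (Copp (Cmul b (Cmul (natC n) (hs b n)))))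
                 <= Cnorm b + Cnorm b * (INR n * B ^ n)).
    { eapply Rle_trans; [apply Cnorm_add|]. rewrite Cnorm_opp, !Cnorm_mul, Cnorm_natC.
      assert (Cnorm (match n with 1%nat => b | _ => C0 end) <= Cnorm b).
      { destruct n as [|[|n]]; try rewrite Cnorm_C0; lra. }
      assert (0 <= INR n) by apply pos_INR.
      assert (Cnorm b * (INR n * Cnorm (hs b n)) <= Cnorm b * (INR n * B ^ n)).
      { apply Rmult_le_compat_l; auto. apply Rmult_le_compat_l; auto. }
      lra. }
    set (X := Cnorm (Cadd _ _)) in *.
    assert (Hr : 0 < INR (S (S n))) by (apply lt_0_INR; lia).
    rewrite S_INR in *. rewrite S_INR in Hr |- *.
    assert (0 <= INR n) by apply pos_INR.
    assert (X <= (INR n + 1 + 1) * B ^ S n).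
    { simpl. unfold B in *. nra. }
    apply Rmult_le_reg_r with (INR n + 1 + 1); [lra|].
    rewrite Rmult_assoc, Rinv_l by lra. lra.
Qed.

Lemma Cpow_norm : forall j q, Cnorm (Cpow j q) = Cnorm j ^ q.
Proof. induction q; simpl. apply Cnorm_C1. rewrite Cnorm_mul, IHq. reflexivity. Qed.

Lemma conv_Hs : forall j f B, Cnorm j = 1 -> 1 <= B -> (forall n, Cnorm (f n) <= B ^ n) -> conv (Hs j f).
Proof.
  intros j f B Hj HB Hf. exists 1, (2 * B). split; [lra|]. intros p q. unfold Hs.
  rewrite !Cnorm_mul, Cpow_norm, Hj, pow1, Cnorm_mkC by (apply Cb_bound; lia).
  assert (A := Cb_bound (p + q) p ltac:(lia)). assert (F := Hf (p + q)%nat).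
  assert (0 <= Cnorm (f (p + q)%nat)) by apply Cnorm_ge0.
  rewrite Rpow_mult_distr. assert (0 <= B ^ (p + q)) by (apply pow_le; lra).
  rewrite Rmult_1_r, Rmult_1_l. rewrite Rmult_comm. apply Rmult_le_compat; lra.
Qed.

Lemma Cnorm_sqrtm1 : forall j, Cmul j j = Copp C1 -> Cnorm j = 1.
Proof. intros j H. assert (E : Cnorm j * Cnorm j = 1) by (rewrite <- Cnorm_mul, H, Cnorm_opp, Cnorm_C1; reflexivity).
  assert (T := Cnorm_ge0 j). nra. Qed.

Definition half : CC := mkC (/ 2) 0.

Lemma case1 (j b : CC) : Cmul j j = Copp C1 ->
  linearizable (Pcub C0 C0) (Qcub b (Cmul (natC 2) (Cmul j b)) (Copp b) C0 C0 C0).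
Proof.
  intro Hj.
  assert (Hj' : smul (cst j) (cst j) = sopp sone) by (rewrite <- cst_mul, Hj, cst_opp, cst_1; reflexivity).
  set (P := Pcub C0 C0). set (Q := Qcub b (Cmul (natC 2) (Cmul j b)) (Copp b) C0 C0 C0).
  assert (HP : P = sopp Ys) by (unfold P; rewrite Pcub_eq, cst_0; ring).
  assert (HQ : Q = sadd Xs (sadd (smul (cst b) (smul Xs Xs))
     (sadd (smul (smul (sadd sone sone) (smul (cst j) (cst b))) (smul Xs Ys)) (sopp (smul (cst b) (smul Ys Ys)))))).
  { unfold Q; rewrite Qcub_eq. cst_tac. ring. }
  set (l := [(b, 1%nat, 0%nat); (Cmul b j, 0%nat, 1%nat)]).
  assert (Hl : goodL l) by (simpl; repeat split; lia).
  assert (HI := sinv_spec l Hl).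
  assert (Hp : polyL l = sadd (smul (cst b) Xs) (smul (cst (Cmul b j)) Ys)).
  { unfold l; simpl polyL. rewrite !mono_S_x, !mono_S_y, !mono00. ring. }
  rewrite Hp in HI.
  set (Iv := sinv l) in *.
  set (z := sadd Xs (smul (cst j) Ys)).
  set (w := sadd Xs (sopp (smul (cst j) Ys))).
  set (Hh := Hs j (hs b)).
  set (Z := smul z Iv). set (W := sadd w Hh).
  assert (HZ : Dv P Q Z = smul (cst j) Z).
  { unfold Z. replace (smul (cst j) (smul z Iv)) with (smul (smul (cst j) z) Iv) by ring.
    apply quot1 with (1 := HI). unfold z. Dv_tac. rewrite HP, HQ. cst_tac. ring [Hj']. }
  assert (HH : Dv P Q Hh = smul (cst j) (ssub (smul (cst b) (smul z z)) Hh)).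
  { unfold Hh, Dv. rewrite Hs_dx, Hs_dy.
    transitivity (smul (Hs j (der (hs b))) (sadd P (smul (cst j) Q))); [ring|].
    assert (PQ : sadd P (smul (cst j) Q) = smul (cst j) (sadd z (smul (cst b) (smul z z))))
      by (rewrite HP, HQ; unfold z; ring [Hj']).
    rewrite PQ.
    assert (ODE : Hs j (fun n => Cadd (sh (der (hs b)) n) (Cmul b (sh (sh (der (hs b))) n))) =
                  Hs j (fun n => Cadd (Cmul b (sh (sh e0) n)) (Copp (hs b n))))
      by (f_equal; apply functional_extensionality; intro; apply hs_ode).
    rewrite !Hs_add, !Hs_scal, !Hs_opp, !Hs_sh, Hs_e0 in ODE.
    fold z in ODE.
    transitivity (smul (cst j) (sadd (smul z (Hs j (der (hs b)))) (smul (cst b) (smul z (smul z (Hs j (der (hs b)))))))); [ring|].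
    rewrite ODE. ring. }
  assert (HW : Dv P Q W = sopp (smul (cst j) W)).
  { unfold W. rewrite Dv_add, HH. unfold w. Dv_tac. rewrite HP, HQ. unfold z. cst_tac. ring [Hj']. }
  assert (Z00 : Z 0%nat 0%nat = C0) by (unfold Z, z; coef_tac Iv l).
  assert (Z10 : Z 1%nat 0%nat = C1) by (unfold Z, z; coef_tac Iv l).
  assert (Z01 : Z 0%nat 1%nat = j) by (unfold Z, z; coef_tac Iv l).
  assert (W00 : W 0%nat 0%nat = C0) by (unfold W, w, Hh, Hs; unfold sadd, sopp, smul, Xs, Ys, cst, mono; simpl; ring).
  assert (W10 : W 1%nat 0%nat = C1) by (unfold W, w, Hh, Hs; unfold sadd, sopp, smul, Xs, Ys, cst, mono; simpl; ring).
  assert (W01 : W 0%nat 1%nat = Copp j) by (unfold W, w, Hh, Hs; unfold sadd, sopp, smul, Xs, Ys, cst, mono; simpl; ring).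
  apply lin_of with (X1 := smul (cst half) (sadd Z W)) (Y1 := smul (cst half) (smul (cst j) (ssub W Z))).
  9: { rewrite Dv_mul, Dv_cst, Dv_add, HZ, HW. ring. }
  9: { rewrite Dv_mul, Dv_cst, Dv_mul, Dv_cst. unfold ssub. rewrite Dv_add, Dv_opp, HZ, HW. ring [Hj']. }
  7: { unfold Z, W, Iv, Hh, z, w; conv_tac; try eassumption.
       apply conv_Hs with (B := 1 + Cnorm b). apply Cnorm_sqrtm1; auto. assert (T:=Cnorm_ge0 b); lra. apply hs_bound. }
  7: { unfold Z, W, Iv, Hh, z, w; conv_tac; try eassumption.
       apply conv_Hs with (B := 1 + Cnorm b). apply Cnorm_sqrtm1; auto. assert (T:=Cnorm_ge0 b); lra. apply hs_bound. }
  all: rewrite !smul_cst; unfold ssub, sadd, sopp; rewrite ?Z00, ?Z10, ?Z01, ?W00, ?W10, ?W01.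
  all: unfold half.
  1,3,4,5: ring.
  - Ceq; field.
  - transitivity (Cmul (Copp (Cmul (mkC (/2) 0) (Cadd C1 C1))) (Cmul j j)); [ring|].
    rewrite Hj. Ceq; field.
Qed.

Lemma Cmul_eq0 : forall a b, Cmul a b = C0 -> a = C0 \/ b = C0.
Proof.
  intros [p q] [r s] H. unfold Cmul, C0 in H; cbn [Cre Cim] in H. injection H; intros H2 H1.
  destruct (Req_dec p 0), (Req_dec q 0).
  - left; subst; reflexivity.
  - right. assert (Hpos : 0 < p*p+q*q) by nra.
    assert (E1 : r*(p*p+q*q) = 0) by (replace (r*(p*p+q*q)) with (p*(p*r-q*s) + q*(p*s+q*r)) by ring; rewrite H1, H2; ring).
    assert (E2 : s*(p*p+q*q) = 0) by (replace (s*(p*p+q*q)) with (p*(p*s+q*r) - q*(p*r-q*s)) by ring; rewrite H1, H2; ring).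
    unfold C0; apply CC_ext; nra.
  - right. assert (Hpos : 0 < p*p+q*q) by nra.
    assert (E1 : r*(p*p+q*q) = 0) by (replace (r*(p*p+q*q)) with (p*(p*r-q*s) + q*(p*s+q*r)) by ring; rewrite H1, H2; ring).
    assert (E2 : s*(p*p+q*q) = 0) by (replace (s*(p*p+q*q)) with (p*(p*s+q*r) - q*(p*r-q*s)) by ring; rewrite H1, H2; ring).
    unfold C0; apply CC_ext; nra.
  - right. assert (Hpos : 0 < p*p+q*q) by nra.
    assert (E1 : r*(p*p+q*q) = 0) by (replace (r*(p*p+q*q)) with (p*(p*r-q*s) + q*(p*s+q*r)) by ring; rewrite H1, H2; ring).
    assert (E2 : s*(p*p+q*q) = 0) by (replace (s*(p*p+q*q)) with (p*(p*s+q*r) - q*(p*r-q*s)) by ring; rewrite H1, H2; ring).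
    unfold C0; apply CC_ext; nra.
Qed.

Definition Ci : CC := mkC 0 1.
Lemma Ci_sq : Cmul Ci Ci = Copp C1.
Proof. unfold Ci, Cmul, Copp, C1; cbn [Cre Cim]; apply CC_ext; ring. Qed.
Lemma mCi_sq : Cmul (Copp Ci) (Copp Ci) = Copp C1.
Proof. unfold Ci, Cmul, Copp, C1; cbn [Cre Cim]; apply CC_ext; ring. Qed.

Ltac natC_tac := rewrite ?natC_S, ?natC_0.

Lemma sub_eq : forall a b, Cadd a (Copp b) = C0 -> a = b.
Proof. intros a b H. transitivity (Cadd (Cadd a (Copp b)) b); [ring|]. rewrite H; ring. Qed.
Lemma add_eq : forall a b, Cadd a b = C0 -> a = Copp b.
Proof. intros a b H. transitivity (Cadd (Cadd a b) (Copp b)); [ring|]. rewrite H; ring. Qed.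

Ltac comp := repeat match goal with z : CC |- _ => let a := fresh "a" in let b := fresh "b" in destruct z as [a b] end;
  unfold natC, Cadd, Cmul, Copp, C0, C1 in *; cbn [Cre Cim] in *;
  repeat match goal with H : mkC _ _ = mkC _ _ |- _ => injection H; clear H; intros end;
  apply CC_ext; simpl INR in *.
Lemma L4a : forall b02 u, Cadd (Cmul (natC 2) b02) (Cmul (natC 5) (Cmul (natC 12) u)) = C0 ->
  b02 = Copp (Cmul (natC 30) u).
Proof. intros; comp; lra. Qed.
Lemma L4b : forall a02 b11 j u, b11 = Cmul (natC 30) (Cmul j u) ->
  Cadd (Cmul (natC 10) a02) (Copp (Cmul (natC 3) b11)) = C0 -> a02 = Cmul (natC 9) (Cmul j u).
Proof. intros a02 b11 j u -> H. comp; nra. Qed.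
Lemma L4c : forall b11 j u, Cadd (Cmul (natC 2) b11) (Copp (Cmul (natC 5) (Cmul j (Cmul (natC 12) u)))) = C0 ->
  b11 = Cmul (natC 30) (Cmul j u).
Proof. intros; comp; nra. Qed.

Theorem theorem1 (a02 a03 b20 b11 b02 b30 b21 b12 : CC) :
  (b12 = C0 /\ a02 = C0 /\ b30 = C0 /\ b21 = C0 /\ a03 = C0 /\
   (b02 + b20)%C = C0 /\ (b11 * b11 + natC 4 * (b20 * b20))%C = C0)
  \/
  (b12 = C0 /\ a02 = C0 /\ b20 = C0 /\ b02 = C0 /\ b21 = C0 /\ a03 = C0 /\
   (natC 9 * b30 - b11 * b11)%C = C0)
  \/
  (b12 = C0 /\ a02 = C0 /\ b11 = C0 /\ b20 = C0 /\ b30 = C0 /\ b21 = C0 /\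
   (natC 9 * a03 + natC 4 * (b02 * b02))%C = C0)
  \/
  (b12 = C0 /\ b30 = C0 /\ b21 = C0 /\ a03 = C0 /\
   (natC 2 * b02 + natC 5 * b20)%C = C0 /\
   (natC 10 * a02 - natC 3 * b11)%C = C0 /\
   (natC 4 * (b11 * b11) + natC 25 * (b20 * b20))%C = C0) ->
  linearizable (Pcub a02 a03) (Qcub b20 b11 b02 b30 b21 b12).
Proof.
  intros [H|[H|[H|H]]].
  - destruct H as (h12 & h02 & h30 & h21 & h03 & hs & hb). subst b12 a02 b30 b21 a03.
    apply add_eq in hs. subst b02.
    assert (HCi := Ci_sq).
    assert (F : Cmul (Cadd b11 (Copp (Cmul (natC 2) (Cmul Ci b20)))) (Cadd b11 (Cmul (natC 2) (Cmul Ci b20))) = C0).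
    { rewrite <- hb. natC_tac. ring [HCi]. }
    destruct (Cmul_eq0 _ _ F) as [E|E].
    + apply sub_eq in E. rewrite E. replace (Cmul (natC 2) (Cmul Ci b20)) with (Cmul (natC 2) (Cmul Ci b20)) by reflexivity.
      apply case1. exact HCi.
    + apply add_eq in E. rewrite E.
      replace (Copp (Cmul (natC 2) (Cmul Ci b20))) with (Cmul (natC 2) (Cmul (Copp Ci) b20)) by ring.
      apply case1. apply mCi_sq.
  - destruct H as (h12 & h02 & h20 & h02' & h21 & h03 & h). subst. apply case2. exact h.
  - destruct H as (h12 & h02 & h11 & h20 & h30 & h21 & h). subst. apply case3. exact h.
  - destruct H as (h12 & h30 & h21 & h03 & hA & hB & hC). subst b12 b30 b21 a03.
    assert (HCi := Ci_sq).
    set (u := mkC (Cre b20 / 12) (Cim b20 / 12)).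
    assert (hb20 : b20 = Cmul (natC 12) u).
    { unfold u; destruct b20 as [r s]; unfold natC, Cmul; cbn [Cre Cim]. apply CC_ext; simpl; field. }
    clearbody u. subst b20.
    apply L4a in hA. subst b02.
    assert (F : Cmul (Cadd (Cmul (natC 2) b11) (Copp (Cmul (natC 5) (Cmul Ci (Cmul (natC 12) u)))))
                     (Cadd (Cmul (natC 2) b11) (Cmul (natC 5) (Cmul Ci (Cmul (natC 12) u)))) = C0).
    { rewrite <- hC. natC_tac. ring [HCi]. }
    destruct (Cmul_eq0 _ _ F) as [E|E].
    + apply L4c in E. rewrite (L4b _ _ _ _ E hB), E. apply case4. exact HCi.
    + assert (E' : Cadd (Cmul (natC 2) b11) (Copp (Cmul (natC 5) (Cmul (Copp Ci) (Cmul (natC 12) u)))) = C0)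
        by (rewrite <- E; ring).
      apply L4c in E'. rewrite (L4b _ _ _ _ E' hB), E'. apply case4. apply mCi_sq.
Qed.
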